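(* Let $R$ be $\mathbb{Z}$ or $\mathbb{Z}/m\mathbb{Z}$ with $m\ge2$, let $\Lambda$ be a free abelian group with basis $x_1,\ldots,x_n$, and let $\vec r=(r_1,\ldots,r_n)$ be an $n$-tuple in $R[\Lambda]$ satisfying the flatness condition. Then every syzygy of $\vec r$ is trivial.
   Context: $R[\Lambda]$ is identified with $R[x_1^{\pm1},\ldots,x_n^{\pm1}]$; $\Lambda_i=\langle x_1,\ldots,x_i\rangle$. A polynomial $p\in R[\Lambda_i]$ is a divisor with respect to $x_i$ if, writing $p=p_kx_i^k+\cdots+p_mx_i^m$ with $p_j\in R[\Lambda_{i-1}]$ and $p_k\ne0$, $p_k$ is a monic monomial in $x_1,\ldots,x_{i-1}$. $\vec r$ satisfies the flatness condition if $r_i\in R[\Lambda_i]$ and $r_i$ is a divisor with respect to $x_i$ for all $i$. A syzygy of $\vec r$ is $(f_1,\ldots,f_n)\in R[\Lambda]^n$ with $\sum_if_ir_i=0$; it is trivial if it lies in the $R[\Lambda]$-submodule generated by the vectors $S_{ij}$ ($i\ne j$) having $r_j$ in position $i$, $-r_i$ in position $j$, and $0$ elsewhere. *)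

(* Defs.v *)
From HB Require Import structures.
From mathcomp Require Import all_boot all_order all_algebra.
From mathcomp Require Import finmap.
From mathcomp.multinomials Require Import monalg.
Set Implicit Arguments. Unset Strict Implicit. Unset Printing Implicit Defensive.
Import Order.TTheory GRing.Theory Num.Theory.
Local Open Scope ring_scope.

(* Exponent vectors: elements of Lambda = Z^n, written additively;
   e i is the exponent of x_(i+1) (variables are 0-indexed by 'I_n). *)
Definition expo (n : nat) := {ffun 'I_n -> int}.

(* The group ring R[Lambda] = R[x_1^{+-1},...,x_n^{+-1}]: finitely supported
   functions Lambda -> R (coefficient of the monomial x^e at e). *)
Definition laurent (R : comNzRingType) (n : nat) := {malg R[expo n]}.

Definition lmono (R : comNzRingType) (n : nat) (e : expo n) : laurent R n := << e >>.

Definition lmul (R : comNzRingType) (n : nat) (p q : laurent R n) : laurent R n :=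
  \sum_(k <- msupp p) \sum_(l <- msupp q) << p@_k * q@_l *g (k + l) >>.

(* R[Lambda_i] where Lambda_i = < x_1, ..., x_i >: with 0-indexed variables,
   only variables of index < i occur. *)
Definition in_sub (R : comNzRingType) (n : nat) (i : nat) (p : laurent R n) : Prop :=
  forall e : expo n, e \in msupp p -> forall j : 'I_n, (i <= j)%N -> e j = 0.

Definition expo_in_sub (n : nat) (i : nat) (e : expo n) : Prop :=
  forall j : 'I_n, (i <= j)%N -> e j = 0.

Definition drop_var (n : nat) (i : 'I_n) (e : expo n) : expo n :=
  [ffun j => if j == i then 0 else e j].

(* For p written as sum_k p_k x_i^k with p_k free of x_i, the coefficient p_k. *)
Definition lslice (R : comNzRingType) (n : nat) (i : 'I_n) (k : int)
    (p : laurent R n) : laurent R n :=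
  \sum_(e <- msupp p | e i == k) << p@_e *g drop_var i e >>.

(* p in R[Lambda_(i+1)] is a divisor with respect to the variable x_(i+1)
   (0-indexed variable i): writing p = p_k x^k + ... + p_m x^m with p_j in
   R[Lambda_i] and p_k <> 0, p_k is a monic (Laurent) monomial in the
   variables of index < i. *)
Definition divisor_wrt (R : comNzRingType) (n : nat) (i : 'I_n) (p : laurent R n) : Prop :=
  exists k : int,
    (forall j : int, j < k -> lslice i j p = 0) /\
    lslice i k p != 0 /\
    exists b : expo n, expo_in_sub i b /\ lslice i k p = lmono R b.

Definition flatness (R : comNzRingType) (n : nat) (r : 'I_n -> laurent R n) : Prop :=
  forall i : 'I_n, in_sub i.+1 (r i) /\ divisor_wrt i (r i).

Definition syzygy (R : comNzRingType) (n : nat) (r : 'I_n -> laurent R n)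
    (f : 'I_n -> laurent R n) : Prop :=
  \sum_(i < n) lmul (f i) (r i) = 0.

(* f lies in the R[Lambda]-submodule generated by the S_ij (i <> j), where
   S_ij has r_j at position i, -r_i at position j, 0 elsewhere:
   f = sum_{i <> j} c_ij S_ij, read coordinatewise. *)
Definition trivial_syzygy (R : comNzRingType) (n : nat) (r : 'I_n -> laurent R n)
    (f : 'I_n -> laurent R n) : Prop :=
  exists c : 'I_n -> 'I_n -> laurent R n,
    forall k : 'I_n,
      f k = \sum_(j < n | j != k) lmul (c k j) (r j)
            - \sum_(i < n | i != k) lmul (c i k) (r i).

Definition all_syzygies_trivial (R : comNzRingType) (n : nat) : Prop :=
  forall r : 'I_n -> laurent R n, flatness r ->
  forall f : 'I_n -> laurent R n, syzygy r f -> trivial_syzygy r f.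

(* Main.v *)
From HB Require Import structures.
Require Import Defs.
From mathcomp Require Import all_boot all_order all_algebra.
From mathcomp Require Import finmap.
From mathcomp.multinomials Require Import monalg.
From mathcomp Require Import ring lra zify.
Set Implicit Arguments. Unset Strict Implicit. Unset Printing Implicit Defensive.
Import Order.TTheory GRing.Theory Num.Theory.
Local Open Scope ring_scope.

Section LRing.
Variables (R : comNzRingType) (n : nat).
Local Notation L := (laurent R n).
Local Notation K := (expo n).
Implicit Types (p q s : L).

Lemma lmulw (d1 d2 : {fset K}) p q :
  (msupp p `<=` d1)%fset -> (msupp q `<=` d2)%fset ->
  lmul p q = \sum_(k <- d1) \sum_(l <- d2) << p@_k * q@_l *g (k + l) >>.
Proof.
move=> le_d1 le_d2; rewrite /lmul (big_fset_incl _ le_d1) /=.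
  apply/eq_bigr=> k1 _; apply/big_fset_incl => // k _ /mcoeff_outdom ->.
  by rewrite mulr0 monalgU0.
move=> k _ /mcoeff_outdom g1k.
by rewrite big1 => // k' _; rewrite g1k mul0r monalgU0.
Qed.

Lemma lmulUU (c1 c2 : R) (k1 k2 : K) :
  lmul << c1 *g k1 >> << c2 *g k2 >> = << c1 * c2 *g (k1 + k2) >>.
Proof. by rewrite (lmulw msuppU_le msuppU_le) !big_seq_fset1 !mcoeffUU. Qed.

Lemma lmul0 p : lmul 0 p = 0.
Proof. by rewrite /lmul msupp0 big_seq_fset0. Qed.

Lemma lmulC p q : lmul p q = lmul q p.
Proof.
rewrite /lmul exchange_big /=; apply/eq_bigr=> k _; apply/eq_bigr=> l _.
by rewrite mulrC addrC.
Qed.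

Lemma lmulDl p q s : lmul (p + q) s = lmul p s + lmul q s.
Proof.
rewrite [in RHS](lmulw (fsubsetUl _ (msupp q)) (fsubset_refl (msupp s))).
rewrite [in RHS](lmulw (fsubsetUr (msupp p) _) (fsubset_refl (msupp s))).
rewrite (lmulw (msuppD_le _ _) (fsubset_refl _)).
rewrite -big_split /=; apply/eq_bigr=> k1 _.
rewrite -big_split /=; apply/eq_bigr=> k2 _.
by rewrite mcoeffD mulrDl monalgUD.
Qed.

Lemma lmulDr p q s : lmul s (p + q) = lmul s p + lmul s q.
Proof. by rewrite !(lmulC s) lmulDl. Qed.

Lemma lmul_suml (I : Type) (r : seq I) (P : pred I) (F : I -> L) q :
  lmul (\sum_(i <- r | P i) F i) q = \sum_(i <- r | P i) lmul (F i) q.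
Proof.
by apply: (big_rec2 (fun a b => lmul a q = b)) => [|i a b _ <-]; rewrite ?lmul0 ?lmulDl.
Qed.

Lemma lmul_sumr (I : Type) (r : seq I) (P : pred I) (F : I -> L) q :
  lmul q (\sum_(i <- r | P i) F i) = \sum_(i <- r | P i) lmul q (F i).
Proof.
rewrite lmulC lmul_suml; apply: eq_bigr => i _; exact: lmulC.
Qed.

Lemma lmulEl p q : lmul p q = \sum_(k <- msupp p) lmul << p@_k *g k >> q.
Proof.
apply/eq_bigr=> k _.
rewrite (lmulw msuppU_le (fsubset_refl _)) big_seq_fset1.
by apply/eq_bigr => l _; rewrite mcoeffUU.
Qed.

Lemma lmulA p q s : lmul p (lmul q s) = lmul (lmul p q) s.
Proof.
rewrite (monalgE p) !lmul_suml; apply/eq_bigr=> k1 _.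
rewrite (monalgE q) !(lmul_suml, lmul_sumr); apply/eq_bigr=> k2 _.
rewrite (monalgE s) !(lmul_suml, lmul_sumr); apply/eq_bigr=> k3 _.
by rewrite !lmulUU mulrA addrA.
Qed.

Lemma lmul1 p : lmul (lmono R (0 : K)) p = p.
Proof.
rewrite /lmono (lmulw msuppU_le (fsubset_refl _)) big_seq_fset1 [RHS]monalgE.
by apply/eq_bigr=> k _; rewrite mcoeffUU mul1r add0r.
Qed.

Lemma lone_neq0 : lmono R (0 : K) != 0.
Proof. by rewrite /lmono monalgU_eq0 oner_eq0. Qed.

Definition LR := laurent R n.
HB.instance Definition _ := GRing.Zmodule.on LR.
HB.instance Definition _ := GRing.Zmodule_isComNzRing.Build LR
  lmulA lmulC lmul1 lmulDl lone_neq0.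

Lemma LR_mulE (p q : LR) : p * q = lmul p q.
Proof. by []. Qed.

End LRing.

Section Koszul.
Variable A : comNzRingType.
Variable r : nat -> A.

Definition inI (m : nat) (x : A) := exists c : nat -> A, x = \sum_(j < m) c j * r j.

Lemma inI0 m : inI m 0.
Proof. by exists (fun _ => 0); rewrite big1 // => j _; rewrite mul0r. Qed.

Lemma inID m x y : inI m x -> inI m y -> inI m (x + y).
Proof.
move=> [c ->] [d ->]; exists (fun j => c j + d j).
by rewrite -big_split /=; apply: eq_bigr => j _; rewrite mulrDl.
Qed.

Lemma inIN m x : inI m x -> inI m (- x).
Proof.
move=> [c ->]; exists (fun j => - c j).
by rewrite -sumrN; apply: eq_bigr => j _; rewrite mulNr.
Qed.

Lemma inIM m a x : inI m x -> inI m (a * x).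
Proof.
move=> [c ->]; exists (fun j => a * c j).
by rewrite mulr_sumr; apply: eq_bigr => j _; rewrite mulrA.
Qed.

Lemma inI_sum m (I : Type) (s : seq I) (P : pred I) (F : I -> A) :
  (forall j, P j -> inI m (F j)) -> inI m (\sum_(j <- s | P j) F j).
Proof.
move=> H; apply: (big_ind (inI m)) => //; [exact: inI0| exact: inID].
Qed.

Definition regular (m : nat) := forall g, inI m (r m * g) -> inI m g.

Lemma koszul n : (forall m, (m < n)%N -> regular m) ->
  forall f : nat -> A, \sum_(i < n) f i * r i = 0 ->
  exists c : nat -> nat -> A, forall k, (k < n)%N ->
    f k = \sum_(j < n) c k j * r j - \sum_(i < n) c i k * r i.
Proof.
elim: n => [|n IH] Hreg f Hf.
  by exists (fun _ _ => 0) => k.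
move: Hf; rewrite big_ord_recr /= => Hf.
have [d Hd] : inI n (f n).
  apply: Hreg => //; exists (fun j => - f j).
  move/eqP: (Hf); rewrite addrC addr_eq0 mulrC => /eqP ->.
  by rewrite -sumrN; apply: eq_bigr => i _; rewrite mulNr.
have Hs : \sum_(i < n) (f i + d i * r n) * r i = 0.
  rewrite (eq_bigr (fun i : 'I_n => f i * r i + r n * (d i * r i))); last first.
    by move=> i _; ring.
  by rewrite big_split /= -mulr_sumr -Hd mulrC.
have [c Hc] := IH (fun m hm => Hreg m (ltnW hm)) (fun i => f i + d i * r n) Hs.
exists (fun i j => if j == n then 0 else if i == n then d j else c i j) => k.
rewrite ltnS leq_eqVlt => /orP [/eqP ->|hk].
  rewrite eqxx [X in _ - X]big1 ?subr0; last by move=> i _; rewrite mul0r.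
  rewrite big_ord_recr /= eqxx mul0r addr0 Hd; apply: eq_bigr => i _.
  by rewrite ltn_eqF.
rewrite (ltn_eqF hk) big_ord_recr [X in _ - X]big_ord_recr /= eqxx mul0r addr0.
under eq_bigr => j _ do rewrite (ltn_eqF (ltn_ord j)).
under [X in _ - (X + _)]eq_bigr => j _ do rewrite (ltn_eqF (ltn_ord j)).
rewrite opprD addrA -Hc //; ring.
Qed.
End Koszul.

Section Slice.
Variables (R : comNzRingType) (n : nat) (i : 'I_n).
Local Notation L := (LR R n).
Local Notation K := (expo n).
Implicit Types (p q h g a b : L).

Lemma lmul_coefw (d1 d2 : {fset K}) p q e :
  (msupp p `<=` d1)%fset -> (msupp q `<=` d2)%fset ->
  (p * q)@_e = \sum_(k <- d1) \sum_(l <- d2) (p@_k * q@_l) *+ (k + l == e).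
Proof.
move=> h1 h2; rewrite LR_mulE (lmulw h1 h2) raddf_sum /=.
apply/eq_bigr=> k _; rewrite raddf_sum /=; apply/eq_bigr=> l _.
by rewrite mcoeffU.
Qed.

Definition pis (t : int) h : L := [malg e in msupp h => h@_e *+ (e i == t)].

Lemma pisE t h e : (pis t h)@_e = h@_e *+ (e i == t).
Proof.
rewrite /pis mcoeffE; case: msuppP => //.
by rewrite mul0rn.
Qed.

Lemma msupp_pis t h : (msupp (pis t h) `<=` msupp h)%fset.
Proof.
apply/fsubsetP=> e; rewrite -!mcoeff_neq0 pisE.
by apply: contraNN => /eqP ->; rewrite mul0rn.
Qed.

Lemma pisD t g h : pis t (g + h) = pis t g + pis t h.
Proof. by apply/malgP=> e; rewrite mcoeffD !pisE mcoeffD mulrnDl. Qed.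

Lemma pis0 t : pis t 0 = 0.
Proof. by apply/malgP=> e; rewrite pisE !mcoeff0 mul0rn. Qed.

Lemma pis_sum t (I : Type) (s : seq I) (P : pred I) (F : I -> L) :
  pis t (\sum_(j <- s | P j) F j) = \sum_(j <- s | P j) pis t (F j).
Proof.
by apply: (big_rec2 (fun x y => pis t x = y)) => [|j x y _ <-]; rewrite ?pis0 ?pisD.
Qed.

Definition hom (s : int) h := forall e, e \in msupp h -> e i = s.

Lemma hom_pis t h : hom t (pis t h).
Proof.
move=> e; rewrite -mcoeff_neq0 pisE.
by case: (e i =P t) => // _; rewrite mulr0n eqxx.
Qed.

Lemma pis_mul_hom s t a b : hom s a -> pis t (a * b) = a * pis (t - s) b.
Proof.
move=> ha; apply/malgP=> e.
rewrite pisE (lmul_coefw _ (fsubset_refl _) (fsubset_refl _)).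
rewrite (lmul_coefw _ (fsubset_refl _) (msupp_pis _ _)).
rewrite -sumrMnl big_seq [RHS]big_seq; apply/eq_bigr=> k /ha hk.
rewrite -sumrMnl; apply/eq_bigr=> l _; rewrite pisE.
case: (k + l =P e) => [<-|_]; last by rewrite /= !mulr0n mul0rn.
rewrite /= !mulr1n ffunE hk -mulrnAr.
have -> : (s + l i == t) = (l i == t - s).
  by apply/eqP/eqP => [<-|->]; ring.
by [].
Qed.

Lemma pis_decomp (S : seq int) h : uniq S -> (forall e, e \in msupp h -> e i \in S) ->
  h = \sum_(t <- S) pis t h.
Proof.
move=> uS hS; apply/malgP=> e; rewrite raddf_sum /=.
under eq_bigr => t _ do rewrite pisE.
case: msuppP => [he|_]; last by rewrite big1 // => t _; rewrite mul0rn.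
rewrite (bigD1_seq (e i)) ?hS //= eqxx mulr1n big1 ?addr0 // => t.
by rewrite eq_sym => /negbTE ->; rewrite mulr0n.
Qed.

Lemma pis_low h t : t < - \sum_(e <- msupp h) `|e i| -> pis t h = 0.
Proof.
move=> ht; apply/malgP=> e; rewrite pisE mcoeff0.
case: msuppP => [he|_]; last by rewrite mul0rn.
suff -> : (e i == t) = false by rewrite mulr0n.
apply/negbTE/eqP => eit; move: ht; rewrite -eit.
rewrite (bigD1_seq e) ?fset_uniq //=.
have : 0 <= \sum_(e' <- msupp h | e' != e) `|e' i| by apply: sumr_ge0.
have := ler_norm (- e i); rewrite normrN.
move: (\sum_(_ <- _ | _) _) => X; move: `|e i| => Y.
rewrite lerNl => h1 h2 h3.
have h4 : - (Y + X) <= - Y by rewrite lerN2 lerDl.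
by have := lt_le_trans (lt_le_trans h3 h4) h1; rewrite ltxx.
Qed.

Definition sv (s : int) : K := [ffun j => if j == i then s else 0].

Lemma lmonoM (x y : K) : (lmono R x : L) * (lmono R y : L) = lmono R (x + y).
Proof. by rewrite LR_mulE /lmono lmulUU mulr1. Qed.

Lemma lmono0 : lmono R (0 : K) = 1 :> L.
Proof. by []. Qed.

Lemma pis_lslice s p : pis s p = (lslice i s p : L) * (lmono R (sv s) : L).
Proof.
rewrite {1}(monalgEw (msupp_pis s p)) /lslice mulr_suml [RHS]big_mkcond /=.
apply: eq_bigr => e _; rewrite pisE.
case: (e i =P s) => [eis|_]; last by rewrite mulr0n monalgU0.
rewrite mulr1n LR_mulE /lmono lmulUU mulr1; congr (<< _ *g _ >>).
apply/ffunP => j; rewrite !ffunE; case: (j =P i) => [->|_]; last by rewrite addr0.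
by rewrite eis add0r.
Qed.


Lemma regular_slice (rr : nat -> L) (H0 : forall j, (j < i)%N -> hom 0 (rr j))
  (k : int) (b : K) (hlow : forall j, j < k -> pis j (rr i) = 0)
  (hk : pis k (rr i) = lmono R b) : regular rr i.
Proof.
move=> g Hg.
have inIpis h t : inI rr i h -> inI rr i (pis t h).
  move=> [c ->]; exists (fun j => pis t (c j)); rewrite pis_sum.
  apply: eq_bigr => j _; rewrite mulrC (pis_mul_hom _ _ (H0 _ (ltn_ord j))).
  by rewrite subr0 mulrC.
pose P t := inI rr i (pis t g).
have step t : (forall t', t' < t -> P t') -> P t.
  move=> IH.
  pose S := undup (k :: [seq e i | e : K <- msupp (rr i)]).
  have uS : uniq S by apply: undup_uniq.
  have kS : k \in S by rewrite mem_undup inE eqxx.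
  have hS : forall e, e \in msupp (rr i) -> e i \in S.
    by move=> e he; rewrite mem_undup inE; apply/orP; right; apply: map_f.
  have := inIpis _ (t + k) Hg.
  rewrite (pis_decomp uS hS) mulr_suml pis_sum.
  under eq_bigr => s _ do rewrite (pis_mul_hom _ _ (@hom_pis _ _)).
  rewrite (bigD1_seq k) //= hk addrK => H.
  have H1 : inI rr i ((lmono R b : L) * pis t g).
    rewrite -[X in inI _ _ X](addrK (\sum_(s <- S | s != k) pis s (rr i) * pis (t + k - s) g)).
    apply: inID => //; apply: inIN; apply: inI_sum => s hs.
    have [slk|kls] := ltP s k; first by rewrite hlow // mul0r; apply: inI0.
    apply: inIM; apply: IH.
    have ks : k < s by rewrite lt_neqAle eq_sym hs kls.
    by rewrite ltrBlDr ltrD2l.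
  have := inIM (lmono R (- b) : L) H1.
  by rewrite mulrA lmonoM addNr lmono0 mul1r.
pose Lb := - \sum_(e <- msupp g) `|e i|.
have ind (N : nat) : forall t, t < Lb + N%:Z -> P t.
  elim: N => [|N IHN] t ht.
    by rewrite /P pis_low; [apply: inI0 | move: ht; rewrite addr0].
  apply: step => t' ht'; apply: IHN; lia.
rewrite (pis_decomp (undup_uniq [seq e i | e : K <- msupp g]) (h := g)); last first.
  by move=> e he; rewrite mem_undup; apply: map_f.
apply: inI_sum => t _; apply: (ind (absz (t - Lb)).+1); lia.
Qed.

End Slice.

Lemma sum_diag (A : zmodType) (m : nat) (k : 'I_m) (F G : 'I_m -> A) :
  F k = G k ->
  \sum_(j < m) F j - \sum_(i < m) G i =
  \sum_(j < m | j != k) F j - \sum_(i < m | i != k) G i.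
Proof.
move=> FG; rewrite (bigD1 k) // [X in _ - X](bigD1 k) // FG.
by rewrite opprD addrACA subrr add0r.
Qed.

Section Main.
Variables (R : comNzRingType) (n : nat).
Local Notation L := (LR R n).

Definition ext (F : 'I_n -> laurent R n) (m : nat) : L :=
  if insub m is Some j then F j else 0.

Lemma extE F (j : 'I_n) : ext F j = F j.
Proof. by rewrite /ext valK. Qed.

Theorem all_triv : all_syzygies_trivial R n.
Proof.
move=> r Hfl f Hsyz.
pose rr := ext r; pose ff := ext f.
have Hreg : forall m, (m < n)%N -> regular rr m.
  move=> m hm; pose i := Ordinal hm.
  have -> : m = i by [].
  have [_ [k [hlow [_ [b [_ hb]]]]]] := Hfl i.
  apply: (@regular_slice R n i rr _ k (b + sv i k)).
  - move=> j hj; have hjn : (j < n)%N := ltn_trans hj hm.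
    have := extE r (Ordinal hjn); rewrite /rr => /= ->.
    have [hin _] := Hfl (Ordinal hjn).
    by move=> e he; apply: (hin e he i).
  - by move=> j hj; rewrite /rr extE pis_lslice hlow // mul0r.
  - by rewrite /rr extE pis_lslice hb lmonoM.
have Hs : \sum_(i < n) ff i * rr i = 0.
  rewrite -[RHS]Hsyz; apply: eq_bigr => i _; by rewrite /ff /rr !extE.
have [c Hc] := koszul Hreg Hs.
exists (fun a b : 'I_n => c a b) => k.
have := Hc k (ltn_ord k); rewrite /ff /rr extE => ->.
rewrite (sum_diag (k := k)); last by [].
have E1 : forall j : 'I_n, c k j * ext r j = lmul (c k j) (r j).
  by move=> j; rewrite extE.
have E2 : forall j : 'I_n, c j k * ext r j = lmul (c j k) (r j).
  by move=> j; rewrite extE.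
rewrite (eq_bigr _ (fun j _ => E1 j)) (eq_bigr _ (fun j _ => E2 j)).
reflexivity.
Qed.
End Main.

Theorem lemma2p8 :
  (forall n : nat, all_syzygies_trivial int n) /\
  (forall m : nat, (1 < m)%N -> forall n : nat, all_syzygies_trivial 'Z_m n).
Proof.
split => [n|m _ n]; exact: all_triv.
Qed.
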